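(* Let $(\mathscr{P},\mathscr{B},\mathrm{I})$ be a linear space with incidence graph $\Gamma$, let $\varphi$ be a gain function on $\Gamma$ with gain group $G$ acting on the left on a nonempty set $\Lambda$. Then $\mathfrak{M}(\Gamma,\varphi)$ is a generalized quadrangle if and only if for every $p\in\mathscr{P}$ and $b\in\mathscr{B}$ with $p$ not incident with $b$, and every $\lambda\in\Lambda$, the function $\rho_{b,p,\lambda}:\mathscr{P}_b\to\Lambda$ is bijective. Moreover, when $\mathfrak{M}(\Gamma,\varphi)$ is a generalized quadrangle: (1) the set $X=\{x_p : p\in\mathscr{P}\}$ is an ovoid of $\mathfrak{M}(\Gamma,\varphi)$; (2) for every $b\in\mathscr{B}$ the set $\mathscr{P}_b$ has the same cardinality as $\Lambda$; hence $(\mathscr{P},\mathscr{B},\mathrm{I})$ is a Steiner system; (3) if $\mathscr{P}$ is finite, then $\Lambda$ is finite, $|\mathscr{P}|=v\ge 3$, $|\Lambda|=k\ge 2$, and in $\mathfrak{M}(\Gamma,\varphi)$ every line is incident with exactly $1+s$ points and every point is incident with exactly $1+t$ lines, where $s=\frac{v-1}{k-1}$ and $t=k-1$.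
   Context: An incidence structure is a triple $(\mathscr{P},\mathscr{B},\mathrm{I})$ where $\mathscr{P}$ (points) and $\mathscr{B}$ (lines) are nonempty disjoint sets and $\mathrm{I}\subseteq\mathscr{P}\times\mathscr{B}$ is a nonempty incidence relation; write $p\ \mathrm{I}\ b$ or $b\ \mathrm{I}\ p$ when $(p,b)\in\mathrm{I}$, and $\mathscr{P}_b=\{q\in\mathscr{P}: q\ \mathrm{I}\ b\}$. It is a linear space if any two distinct points are incident with exactly one common line, each line is incident with at least two points, and some point and line are not incident. A linear space is a Steiner system if all sets $\mathscr{P}_b$ have the same (possibly infinite) cardinality. The incidence graph $\Gamma$ is the bipartite graph with vertex set $\mathscr{P}\cup\mathscr{B}$ and an edge $bp$ for each incident pair; every edge is oriented from its line to its point. A gain function with gain group $G$ assigns to each edge $e$ an element $\varphi(e)\in G$ (extended to the free group on edges, so $\varphi(e^{-1})=\varphi(e)^{-1}$). For a walk $w=(u_0,e_1,u_1,\dots,e_n,u_n)$ in $\Gamma$, $\varphi_w=\varphi(e_n)^{\delta_n}\cdots\varphi(e_1)^{\delta_1}$ with $\delta_i=1$ if $e_i$ is oriented from $u_{i-1}$ to $u_i$ and $\delta_i=-1$ otherwise. For $b\in\mathscr{B}$, $p\in\mathscr{P}$ with $p$ not incident with $b$, define $\rho_{b,p}:\mathscr{P}_b\to G$ by $\rho_{b,p}(q)=\varphi_w$ where $w=(b,e_1,q,e_2,b',e_3,p)$ and $b'$ is the unique line incident with $p$ and $q$ (so $\rho_{b,p}(q)=\varphi(b'p)\varphi(b'q)^{-1}\varphi(bq)$);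 and for $\lambda\in\Lambda$ define $\rho_{b,p,\lambda}(q)=\rho_{b,p}(q)\cdot\lambda$. Construction $\mathfrak{M}(\Gamma,\varphi)$: the incidence structure whose points are the formal symbols $x_p$ ($p\in\mathscr{P}$) and $y_{b,\lambda}$ ($b\in\mathscr{B},\lambda\in\Lambda$), whose lines are the formal symbols $z_{p,\lambda}$ ($p\in\mathscr{P},\lambda\in\Lambda$), and whose incidences are exactly: $x_p$ incident with $z_{p,\lambda}$ for all $\lambda$, and $y_{b,\lambda}$ incident with $z_{p,\mu}$ whenever $b\ \mathrm{I}\ p$ and $\mu=\varphi(bp)\cdot\lambda$. A $k$-chain is a sequence $(u_0,\dots,u_k)$ of elements with $u_i$ incident with $u_{i-1}$; $d(u,v)$ is the least $k$ admitting a $k$-chain from $u$ to $v$. A generalized quadrangle is an incidence structure with $d(u,v)\le 4$ for all $u,v$ and a unique $k$-chain from $u$ to $v$ whenever $d(u,v)=k<4$. An ovoid of a generalized quadrangle is a set $O$ of points such that each line is incident with exactly one point of $O$. *)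

(* Defs.v *)
From Stdlib Require Import List Arith ClassicalEpsilon.
Import ListNotations.
Set Implicit Arguments.

Section Defs.

Variables (Pt Ln : Type) (inc : Pt -> Ln -> Prop).

Definition elt := (Pt + Ln)%type.

Definition elt_inc (u v : elt) : Prop :=
  match u, v with
  | inl p, inr l => inc p l
  | inr l, inl p => inc p l
  | _, _ => False
  end.

Fixpoint consec (s : list elt) : Prop :=
  match s with
  | x :: ((y :: _) as t) => elt_inc y x /\ consec t
  | _ => True
  end.

Definition is_chain (u v : elt) (k : nat) (s : list elt) : Prop :=
  length s = S k /\ hd_error s = Some u /\ last s u = v /\ consec s.

Definition is_dist (u v : elt) (k : nat) : Prop :=
  (exists s, is_chain u v k s) /\
  (forall j s, is_chain u v j s -> k <= j).

Definition gen_quadrangle : Prop :=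
  (forall u v : elt, exists k, k <= 4 /\ is_dist u v k) /\
  (forall (u v : elt) (k : nat), k < 4 -> is_dist u v k ->
     forall s1 s2, is_chain u v k s1 -> is_chain u v k s2 -> s1 = s2).

Definition ovoid (O : Pt -> Prop) : Prop :=
  forall l : Ln, exists! x, O x /\ inc x l.

Definition points_on (b : Ln) := { q : Pt | inc q b }.

Definition linear_space : Prop :=
  (forall p q : Pt, p <> q -> exists! b, inc p b /\ inc q b) /\
  (forall b : Ln, exists p q, p <> q /\ inc p b /\ inc q b) /\
  (exists p b, ~ inc p b).

Definition bij (A C : Type) (f : A -> C) : Prop :=
  (forall x y, f x = f y -> x = y) /\ (forall z, exists x, f x = z).

Definition equipotent (A C : Type) : Prop := exists f : A -> C, bij f.

Definition steiner_system : Prop :=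
  linear_space /\ forall b b' : Ln, equipotent (points_on b) (points_on b').

End Defs.

Definition has_card (T : Type) (A : T -> Prop) (n : nat) : Prop :=
  exists l : list T, NoDup l /\ length l = n /\ forall x, In x l <-> A x.

Definition finite_type (T : Type) : Prop := exists n, has_card (fun _ : T => True) n.

Record is_group (G : Type) (mul : G -> G -> G) (inv : G -> G) (one : G) : Prop := {
  grp_assoc : forall x y z, mul x (mul y z) = mul (mul x y) z;
  grp_mul1g : forall x, mul one x = x;
  grp_mulg1 : forall x, mul x one = x;
  grp_mulVg : forall x, mul (inv x) x = one;
  grp_mulgV : forall x, mul x (inv x) = one }.

Record is_left_action (G L : Type) (mul : G -> G -> G) (one : G)
    (act : G -> L -> L) : Prop := {
  act1 : forall x, act one x = x;
  actM : forall g h x, act (mul g h) x = act g (act h x) }.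

(* A gain function is given as phi p b = phi(bp) for the edge bp (oriented b -> p);
   its values on non-incident pairs are irrelevant. *)
Unset Implicit Arguments.
Section Rho.
Variables (P B G L : Type) (I : P -> B -> Prop)
  (mul : G -> G -> G) (inv : G -> G) (act : G -> L -> L) (phi : P -> B -> G).

(* the (unique, in a linear space, when p <> q) line through p and q *)
Definition line_through (b0 : B) (p q : P) : B :=
  epsilon (inhabits b0) (fun b' => I p b' /\ I q b').

Definition rho (b : B) (p : P) (q : points_on I b) : G :=
  let b' := line_through b p (proj1_sig q) in
  mul (mul (phi p b') (inv (phi (proj1_sig q) b'))) (phi (proj1_sig q) b).

Definition rho_lam (b : B) (p : P) (lam : L) (q : points_on I b) : L :=
  act (rho b p q) lam.

(* points: inl p = x_p, inr (b, lam) = y_{b,lam};  lines: (p, lam) = z_{p,lam} *)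
Definition M_inc (x : (P + (B * L))%type) (z : (P * L)%type) : Prop :=
  match x with
  | inl p => fst z = p
  | inr (b, lam) => I (fst z) b /\ snd z = act (phi (fst z) b) lam
  end.

End Rho.
Arguments line_through {P B} I b0 p q.
Arguments rho {P B G} I mul inv phi b p q.
Arguments rho_lam {P B G L} I mul inv act phi b p lam q.
Arguments M_inc {P B G L} I act phi x z.

(* Main.v *)
Require Import Defs.
From Stdlib Require Import List Arith.
From Stdlib Require Import ClassicalEpsilon ProofIrrelevance Classical Lia.
Import ListNotations.


Section Gen.
Variables (Pt Ln : Type) (inc : Pt -> Ln -> Prop).
Notation E := (elt Pt Ln).

Definition side (u : E) : bool := match u with inl _ => true | inr _ => false end.

Lemma last_ne (a b c : E) s : last (c :: s) a = last (c :: s) b.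
Proof. revert c; induction s as [|d s IH]; intros c; [reflexivity|]. change (last (d :: s) a = last (d :: s) b). apply IH. Qed.

Lemma last_cons (a b : E) s : last (b :: s) a = last s b.
Proof. destruct s. reflexivity. change (last (e :: s) a = last (e :: s) b). apply last_ne. Qed.

Lemma consec_parity : forall s (a : E), consec inc (a :: s) ->
  side (last s a) = if Nat.even (length s) then side a else negb (side a).
Proof.
  induction s as [|b s IH]; intros a H; [simpl; auto|].
  destruct H as [H1 H2]. rewrite last_cons, (IH b H2).
  change (length (b :: s)) with (S (length s)).
  rewrite Nat.even_succ, <- Nat.negb_even.
  destruct a, b; simpl in H1; try contradiction;
  destruct (Nat.even (length s)); reflexivity.
Qed.

Lemma chain_parity u v k s : is_chain inc u v k s ->
  side v = if Nat.even k then side u else negb (side u).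
Proof.
  intros [Hl [Hh [Hla Hc]]]. destruct s as [|a s]; [discriminate|].
  simpl in Hh; injection Hh as ->. simpl in Hl; injection Hl as <-.
  rewrite last_cons in Hla. subst v. apply consec_parity; auto.
Qed.

Lemma chain0 u v s : is_chain inc u v 0 s -> s = [u] /\ u = v.
Proof.
  intros [Hl [Hh [Hla Hc]]].
  destruct s as [|a [|b s]]; simpl in *; try discriminate.
  injection Hh as ->. auto.
Qed.

Lemma chain1 u v s : is_chain inc u v 1 s -> s = [u; v] /\ elt_inc inc v u.
Proof.
  intros [Hl [Hh [Hla Hc]]].
  destruct s as [|a [|b [|c s]]]; simpl in *; try discriminate.
  injection Hh as ->. subst. tauto.
Qed.

Lemma chain2 u v s : is_chain inc u v 2 s -> exists w, s = [u; w; v] /\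
  elt_inc inc w u /\ elt_inc inc v w.
Proof.
  intros [Hl [Hh [Hla Hc]]].
  destruct s as [|a [|b [|c [|d s]]]]; simpl in *; try discriminate.
  injection Hh as ->. subst. exists b. tauto.
Qed.

Lemma chain3 u v s : is_chain inc u v 3 s -> exists w1 w2, s = [u; w1; w2; v] /\
  elt_inc inc w1 u /\ elt_inc inc w2 w1 /\ elt_inc inc v w2.
Proof.
  intros [Hl [Hh [Hla Hc]]].
  destruct s as [|a [|b [|c [|d [|e s]]]]]; simpl in *; try discriminate.
  injection Hh as ->. subst. exists b, c. tauto.
Qed.

Lemma mk_chain u v s : hd_error s = Some u -> last s u = v -> consec inc s ->
  is_chain inc u v (pred (length s)) s.
Proof.
  intros. destruct s; [discriminate|]. repeat split; auto.
Qed.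

Lemma mk_dist u v k s : is_chain inc u v k s ->
  (forall j s', j < k -> ~ is_chain inc u v j s') -> is_dist inc u v k.
Proof.
  intros Hc Hm. split; [eauto|]. intros j s' Hj.
  destruct (le_lt_dec k j); auto. exfalso; eapply Hm; eauto.
Qed.

Definition condA := (forall x, exists l, inc x l) /\ (forall l, exists x, inc x l).
Definition condB := forall x y l l', x <> y -> inc x l -> inc y l -> inc x l' -> inc y l' -> l = l'.
Definition condC := forall x l, ~ inc x l ->
  (exists m y, inc x m /\ inc y m /\ inc y l) /\
  (forall m y m' y', inc x m -> inc y m -> inc y l -> inc x m' -> inc y' m' -> inc y' l ->
     m = m' /\ y = y').

Ltac par H := let X := fresh in pose proof (chain_parity _ _ _ _ H) as X; simpl in X; discriminate.

Lemma gq_of : condA -> condB -> condC -> gen_quadrangle inc.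
Proof.
  intros [HA1 HA2] HB HC. split.
  - intros [x|l] [y|l'].
    + destruct (classic (x = y)) as [<-|Hxy].
      { exists 0; split; auto. apply (mk_dist _ _ _ [inl x]); [apply (mk_chain _ _ [inl x]); simpl; auto|].
        intros; lia. }
      destruct (classic (exists l, inc x l /\ inc y l)) as [[l [H1 H2]]|Hn].
      { exists 2; split; auto. apply (mk_dist _ _ _ [inl x; inr l; inl y]).
        apply (mk_chain _ _ [inl x; inr l; inl y]); simpl; auto.
        intros j s' Hj Hc. destruct j as [|[|j]]; [|par Hc|lia].
        apply chain0 in Hc as [_ Hc]. congruence. }
      destruct (HA1 y) as [l Hy].
      assert (Hx : ~ inc x l) by eauto.
      destruct (HC x l Hx) as [[m [y' [H1 [H2 H3]]]] _].
      exists 4; split; auto. apply (mk_dist _ _ _ [inl x; inr m; inl y'; inr l; inl y]).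
      apply (mk_chain _ _ [inl x; inr m; inl y'; inr l; inl y]); simpl; auto.
      intros j s' Hj Hc. destruct j as [|[|[|[|j]]]]; try par Hc; try lia.
      all: try (apply chain0 in Hc as [_ Hc]; congruence).
      apply chain2 in Hc as [w [_ [W1 W2]]]. destruct w; simpl in *; try contradiction. eauto.
    + destruct (classic (inc x l')) as [Hi|Hn].
      { exists 1; split; auto. apply (mk_dist _ _ _ [inl x; inr l']).
        apply (mk_chain _ _ [inl x; inr l']); simpl; auto.
        intros j s' Hj Hc. destruct j as [|j]; [|lia].
        apply chain0 in Hc as [_ Hc]. congruence. }
      destruct (HC x l' Hn) as [[m [y' [H1 [H2 H3]]]] _].
      exists 3; split; auto. apply (mk_dist _ _ _ [inl x; inr m; inl y'; inr l']).
      apply (mk_chain _ _ [inl x; inr m; inl y'; inr l']); simpl; auto.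
      intros j s' Hj Hc. destruct j as [|[|[|j]]]; try par Hc; try lia.
      all: try (apply chain0 in Hc as [_ Hc]; congruence).
      all: try (apply chain1 in Hc as [_ Hc]; simpl in Hc; contradiction).
    + destruct (classic (inc y l)) as [Hi|Hn].
      { exists 1; split; auto. apply (mk_dist _ _ _ [inr l; inl y]).
        apply (mk_chain _ _ [inr l; inl y]); simpl; auto.
        intros j s' Hj Hc. destruct j as [|j]; [|lia].
        apply chain0 in Hc as [_ Hc]. congruence. }
      destruct (HC y l Hn) as [[m [y' [H1 [H2 H3]]]] _].
      exists 3; split; auto. apply (mk_dist _ _ _ [inr l; inl y'; inr m; inl y]).
      apply (mk_chain _ _ [inr l; inl y'; inr m; inl y]); simpl; auto.
      intros j s' Hj Hc. destruct j as [|[|[|j]]]; try par Hc; try lia.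
      all: try (apply chain0 in Hc as [_ Hc]; congruence).
      all: try (apply chain1 in Hc as [_ Hc]; simpl in Hc; contradiction).
    + destruct (classic (l = l')) as [<-|Hll].
      { exists 0; split; auto. apply (mk_dist _ _ _ [inr l]); [apply (mk_chain _ _ [inr l]); simpl; auto|].
        intros; lia. }
      destruct (classic (exists x, inc x l /\ inc x l')) as [[x [H1 H2]]|Hn].
      { exists 2; split; auto. apply (mk_dist _ _ _ [inr l; inl x; inr l']).
        apply (mk_chain _ _ [inr l; inl x; inr l']); simpl; auto.
        intros j s' Hj Hc. destruct j as [|[|j]]; [|par Hc|lia].
        apply chain0 in Hc as [_ Hc]. congruence. }
      destruct (HA2 l') as [y Hy].
      assert (Hx : ~ inc y l) by eauto.
      destruct (HC y l Hx) as [[m [y' [H1 [H2 H3]]]] _].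
      exists 4; split; auto. apply (mk_dist _ _ _ [inr l; inl y'; inr m; inl y; inr l']).
      apply (mk_chain _ _ [inr l; inl y'; inr m; inl y; inr l']); simpl; auto.
      intros j s' Hj Hc. destruct j as [|[|[|[|j]]]]; try par Hc; try lia.
      all: try (apply chain0 in Hc as [_ Hc]; congruence).
      apply chain2 in Hc as [w [_ [W1 W2]]]. destruct w; simpl in *; try contradiction. eauto.
  - intros u v k Hk [_ Hmin] s1 s2 H1 H2.
    destruct k as [|[|[|[|k]]]]; try lia.
    + apply chain0 in H1 as [-> _]. apply chain0 in H2 as [-> _]. auto.
    + apply chain1 in H1 as [-> _]. apply chain1 in H2 as [-> _]. auto.
    + assert (Huv : u <> v).
      { intros <-. specialize (Hmin 0 [u]). assert (2 <= 0); [|lia]. apply Hmin.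
        apply (mk_chain _ _ [u]); simpl; auto. }
      apply chain2 in H1 as [w1 [-> [A1 A2]]]. apply chain2 in H2 as [w2 [-> [B1 B2]]].
      destruct u as [x|l], v as [y|l'], w1 as [a1|a1], w2 as [a2|a2]; simpl in *; try contradiction.
      * rewrite (HB x y a1 a2); auto. congruence.
      * destruct (classic (a1 = a2)) as [->|Hn]; auto.
        exfalso. apply Huv. f_equal. eapply HB; eauto.
    + assert (Hd1 : forall x l, u = inl x -> v = inr l -> ~ inc x l).
      { intros x l -> -> Hi. specialize (Hmin 1 [inl x; inr l]). assert (3 <= 1); [|lia]. apply Hmin.
        apply (mk_chain _ _ [inl x; inr l]); simpl; auto. }
      assert (Hd2 : forall x l, u = inr l -> v = inl x -> ~ inc x l).
      { intros x l -> -> Hi. specialize (Hmin 1 [inr l; inl x]). assert (3 <= 1); [|lia]. apply Hmin.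
        apply (mk_chain _ _ [inr l; inl x]); simpl; auto. }
      apply chain3 in H1 as [a1 [b1 [-> [A1 [A2 A3]]]]].
      apply chain3 in H2 as [a2 [b2 [-> [B1 [B2 B3]]]]].
      destruct u as [x|l], v as [y|l'], a1 as [a1|a1], a2 as [a2|a2], b1 as [b1|b1], b2 as [b2|b2];
        simpl in *; try contradiction.
      * destruct (HC x l' (Hd1 _ _ eq_refl eq_refl)) as [_ U].
        destruct (U a1 b1 a2 b2) as [-> ->]; auto.
      * destruct (HC y l (Hd2 _ _ eq_refl eq_refl)) as [_ U].
        destruct (U b1 a1 b2 a2) as [-> ->]; auto.
Qed.

Lemma C_of_gq : gen_quadrangle inc -> condC.
Proof.
  intros [H1 H2] x l Hn.
  destruct (H1 (inl x) (inr l)) as [k [Hk Hd]].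
  assert (k = 3).
  { destruct Hd as [[s Hs] _]. destruct k as [|[|[|[|[|k]]]]]; try lia; try par Hs.
    all: try (apply chain0 in Hs as [_ Hs]; discriminate).
    all: try (apply chain1 in Hs as [_ Hs]; contradiction). }
  subst k. split.
  - destruct Hd as [[s Hs] _]. apply chain3 in Hs as [a [b [_ [A1 [A2 A3]]]]].
    destruct a as [a|a], b as [b|b]; simpl in *; try contradiction. eauto.
  - intros m y m' y' G1 G2 G3 G4 G5 G6.
    assert (E1 : is_chain inc (inl x) (inr l) 3 [inl x; inr m; inl y; inr l])
      by (apply (mk_chain _ _ [inl x; inr m; inl y; inr l]); simpl; auto).
    assert (E2 : is_chain inc (inl x) (inr l) 3 [inl x; inr m'; inl y'; inr l])
      by (apply (mk_chain _ _ [inl x; inr m'; inl y'; inr l]); simpl; auto).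
    pose proof (H2 _ _ 3 ltac:(lia) Hd _ _ E1 E2) as Heq.
    injection Heq; auto.
Qed.

End Gen.


Definition decP (Q : Prop) : bool := if excluded_middle_informative Q then true else false.
Lemma decP_spec Q : decP Q = true <-> Q.
Proof. unfold decP. destruct excluded_middle_informative; split; congruence || tauto. Qed.

Lemma has_card_ext T (A A' : T -> Prop) n : has_card A n -> (forall x, A x <-> A' x) -> has_card A' n.
Proof. intros [l [H1 [H2 H3]]] E. exists l. split; [auto|split; [auto|]]. intros x. rewrite H3. apply E. Qed.

Lemma card_le T (A : T -> Prop) n l : has_card A n -> NoDup l -> (forall x, In x l -> A x) -> length l <= n.
Proof.
  intros [l' [H1 [H2 H3]]] Hn Hi. rewrite <- H2. apply NoDup_incl_length; auto.
  intros x Hx. apply H3; auto.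
Qed.

Lemma has_card_uniq T (A : T -> Prop) n m : has_card A n -> has_card A m -> n = m.
Proof.
  intros Hn Hm. destruct Hn as [l [H1 [H2 H3]]] eqn:E1. destruct Hm as [l' [H1' [H2' H3']]] eqn:E2.
  assert (length l <= m) by (apply (card_le _ _ _ _ Hm); auto; intros; apply H3; auto).
  assert (length l' <= n) by (apply (card_le _ _ _ _ Hn); auto; intros; apply H3'; auto).
  lia.
Qed.

Lemma filter_len T (f : T -> bool) l :
  length (filter f l) + length (filter (fun x => negb (f x)) l) = length l.
Proof. induction l; simpl; auto. destruct (f a); simpl; lia. Qed.

Lemma has_card_split T (A Q : T -> Prop) n : has_card A n ->
  exists m m', has_card (fun x => A x /\ Q x) m /\ has_card (fun x => A x /\ ~ Q x) m' /\ n = m + m'.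
Proof.
  intros [l [H1 [H2 H3]]].
  exists (length (filter (fun x => decP (Q x)) l)), (length (filter (fun x => negb (decP (Q x))) l)).
  split; [|split].
  - exists (filter (fun x => decP (Q x)) l). split; [apply NoDup_filter; auto|split; [reflexivity|]].
    intros x. rewrite filter_In, decP_spec, H3. tauto.
  - exists (filter (fun x => negb (decP (Q x))) l). split; [apply NoDup_filter; auto|split; [reflexivity|]].
    intros x. rewrite filter_In, H3. split.
    + intros [Hx Hd]. split; auto. intros Hq. apply decP_spec in Hq. rewrite Hq in Hd. discriminate.
    + intros [Hx Hq]. split; auto. destruct (decP (Q x)) eqn:E; auto.
      exfalso; apply Hq; apply decP_spec; auto.
  - rewrite filter_len. auto.
Qed.

Lemma has_card_sub T (A Q : T -> Prop) n : has_card A n -> exists m, has_card (fun x => A x /\ Q x) m.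
Proof. intros H. destruct (has_card_split _ A Q n H) as [m [_ [H1 _]]]. eauto. Qed.

Lemma NoDup_map_on T U (f : T -> U) l : NoDup l ->
  (forall x y, In x l -> In y l -> f x = f y -> x = y) -> NoDup (map f l).
Proof.
  induction l as [|a l IH]; intros Hn Hi; simpl; constructor.
  - intros Hin. apply in_map_iff in Hin as [x [Ex Hx]].
    inversion Hn; subst. assert (x = a) by (apply Hi; simpl; auto). subst. contradiction.
  - inversion Hn; subst. apply IH; auto. intros; apply Hi; simpl; auto.
Qed.

Lemma has_card_image T U (A : T -> Prop) (C : U -> Prop) (f : T -> U) n : has_card A n ->
  (forall x y, A x -> A y -> f x = f y -> x = y) -> (forall x, A x -> C (f x)) ->
  (forall z, C z -> exists x, A x /\ f x = z) -> has_card C n.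
Proof.
  intros [l [H1 [H2 H3]]] Hi Hm Hs. exists (map f l). split; [|split].
  - apply NoDup_map_on; auto. intros x y Hx Hy. apply Hi; apply H3; auto.
  - rewrite length_map; auto.
  - intros z. rewrite in_map_iff. split.
    + intros [x [<- Hx]]. apply Hm, H3; auto.
    + intros Hz. destruct (Hs z Hz) as [x [Hx <-]]. exists x; split; auto. apply H3; auto.
Qed.

Lemma has_card_remove T (A : T -> Prop) n p : has_card A n -> A p ->
  has_card (fun x => A x /\ x <> p) (n - 1).
Proof.
  intros [l [H1 [H2 H3]]] Hp. apply H3 in Hp. destruct (in_split _ _ Hp) as [l1 [l2 ->]].
  exists (l1 ++ l2). split; [|split].
  - eapply NoDup_remove_1; eauto.
  - rewrite length_app in *. simpl in H2. lia.
  - intros x. pose proof (NoDup_remove_2 _ _ _ H1). split.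
    + intros Hx. split. apply H3. apply in_app_iff in Hx as [?|?]; apply in_app_iff; simpl; auto.
      intros ->. contradiction.
    + intros [Hx Hxp]. apply H3 in Hx. apply in_app_iff in Hx as [?|[?|?]]; apply in_app_iff; auto.
      congruence.
Qed.

Lemma has_card_empty T (A : T -> Prop) n : has_card A n -> (forall x, ~ A x) -> n = 0.
Proof. intros [l [H1 [H2 H3]]] He. destruct l as [|a l]; simpl in *; auto.
  exfalso. apply (He a), H3. auto. Qed.

Lemma count_fibers T U (c : T -> U) m : forall lD, NoDup lD -> forall (A : T -> Prop) n, has_card A n ->
  (forall x, A x -> In (c x) lD) ->
  (forall u, In u lD -> has_card (fun x => A x /\ c x = u) m) -> n = length lD * m.
Proof.
  induction lD as [|u lD IH]; intros Hn A n Hc Him Hf.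
  - simpl. apply (has_card_empty _ A n Hc). intros x Hx. apply (Him x Hx).
  - destruct (has_card_split _ A (fun x => c x = u) n Hc) as [m1 [m2 [K1 [K2 ->]]]].
    inversion Hn; subst.
    assert (m1 = m) by (eapply has_card_uniq; eauto; apply Hf; simpl; auto). subst m1.
    rewrite (IH H2 _ m2 K2). simpl. lia.
    + intros x [Hx Hu]. destruct (Him x Hx); auto. congruence.
    + intros u' Hu'. eapply has_card_ext. apply (Hf u'); simpl; auto.
      intros x. split; [intros [? ?]; subst; split; auto; split; auto; intros E; rewrite <- E in H1; contradiction|tauto].
Qed.


Lemma bij_inv A C (f : A -> C) : bij f -> exists g : C -> A, bij g.
Proof.
  intros [Hi Hs].
  exists (fun z => proj1_sig (constructive_indefinite_description _ (Hs z))).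
  split.
  - intros z1 z2 E.
    destruct (constructive_indefinite_description _ (Hs z1)) as [x1 E1].
    destruct (constructive_indefinite_description _ (Hs z2)) as [x2 E2]. simpl in E. congruence.
  - intros x. exists (f x).
    destruct (constructive_indefinite_description _ (Hs (f x))) as [x1 E1]. simpl. auto.
Qed.

Lemma bij_comp A C D (f : A -> C) (g : C -> D) : bij f -> bij g -> bij (fun x => g (f x)).
Proof.
  intros [Hi Hs] [Gi Gs]. split.
  - intros x y E. auto.
  - intros z. destruct (Gs z) as [y <-]. destruct (Hs y) as [x <-]. eauto.
Qed.


Section M.
Variables (P B : Type) (I : P -> B -> Prop)
  (G : Type) (mul : G -> G -> G) (inv : G -> G) (one : G)
  (L : Type) (act : G -> L -> L) (phi : P -> B -> G)
  (hlin : linear_space I) (hG : is_group mul inv one)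
  (hact : is_left_action mul one act) (hL : inhabited L).

Notation Minc := (M_inc I act phi).

Lemma act_inv g x : act (inv g) (act g x) = x.
Proof. rewrite <- (actM hact), (grp_mulVg hG), (act1 hact). auto. Qed.
Lemma act_inv' g x : act g (act (inv g) x) = x.
Proof. rewrite <- (actM hact), (grp_mulgV hG), (act1 hact). auto. Qed.
Lemma act_inj g x y : act g x = act g y -> x = y.
Proof. intros H. rewrite <- (act_inv g x), <- (act_inv g y), H. auto. Qed.

Lemma ls_uniq p q b c : p <> q -> I p b -> I q b -> I p c -> I q c -> b = c.
Proof.
  intros H1 H2 H3 H4 H5. destruct hlin as [U _].
  destruct (U p q H1) as [d [_ Hd]].
  rewrite <- (Hd b), <- (Hd c); auto.
Qed.

Lemma lt_spec b0 p q : p <> q -> I p (line_through I b0 p q) /\ I q (line_through I b0 p q).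
Proof.
  intros H. unfold line_through. apply epsilon_spec.
  destruct hlin as [U _]. destruct (U p q H) as [d [Hd _]]. eauto.
Qed.

Lemma lt_eq b0 p q c : p <> q -> I p c -> I q c -> line_through I b0 p q = c.
Proof. intros H H1 H2. destruct (lt_spec b0 p q H). eapply ls_uniq; eauto. Qed.

Lemma rho_eq b p lam (q : points_on I b) :
  rho_lam I mul inv act phi b p lam q =
  act (phi p (line_through I b p (proj1_sig q)))
   (act (inv (phi (proj1_sig q) (line_through I b p (proj1_sig q))))
     (act (phi (proj1_sig q) b) lam)).
Proof. unfold rho_lam, rho. simpl. rewrite !(actM hact). auto. Qed.

Lemma sol_char b lam p mu m y : ~ I p b ->
  Minc (inr (b, lam)) m -> Minc y m -> Minc y (p, mu) ->
  exists q (Hq : I q b), m = (q, act (phi q b) lam) /\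
    y = inr (line_through I b p q,
             act (inv (phi q (line_through I b p q))) (act (phi q b) lam)) /\
    rho_lam I mul inv act phi b p lam (exist _ q Hq) = mu.
Proof.
  intros Hn H1 H2 H3. destruct m as [q nu]. simpl in H1. destruct H1 as [Hq ->].
  exists q, Hq. split; auto.
  destruct y as [r|[c kap]]; simpl in H2, H3.
  - subst. contradiction.
  - destruct H2 as [Hqc E2]. destruct H3 as [Hpc E3].
    assert (Hpq : p <> q) by (intros ->; contradiction).
    rewrite (lt_eq b p q c Hpq Hpc Hqc).
    rewrite E2, act_inv. split; auto.
    rewrite rho_eq. simpl. rewrite (lt_eq b p q c Hpq Hpc Hqc), E2, act_inv. auto.
Qed.

Lemma sol_mk b lam p q (Hq : I q b) : ~ I p b ->
  let c := line_through I b p q in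
  let y := inr (c, act (inv (phi q c)) (act (phi q b) lam)) in
  Minc (inr (b, lam)) (q, act (phi q b) lam) /\ Minc y (q, act (phi q b) lam) /\
  Minc y (p, rho_lam I mul inv act phi b p lam (exist _ q Hq)).
Proof.
  intros Hn c y. assert (Hpq : p <> q) by (intros ->; contradiction).
  destruct (lt_spec b p q Hpq) as [Hpc Hqc].
  simpl. split; [auto|]. split; [split; auto; rewrite act_inv'; auto|].
  split; auto. rewrite rho_eq. reflexivity.
Qed.

Lemma condA_M : condA _ _ Minc.
Proof.
  destruct hL as [l0]. split.
  - intros [p|[b lam]].
    + exists (p, l0). reflexivity.
    + destruct hlin as [_ [H2 _]]. destruct (H2 b) as [q [_ [_ [Hq _]]]].
      exists (q, act (phi q b) lam). simpl. auto.
  - intros [p mu]. exists (inl p). reflexivity.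
Qed.

Lemma condB_M : condB _ _ Minc.
Proof.
  intros [p|[b lam]] [q|[c kap]] [r nu] [r' nu'] Hxy H1 H2 H3 H4; simpl in *.
  - congruence.
  - destruct H2, H4. subst. auto.
  - destruct H1, H3. subst. auto.
  - destruct H1, H2, H3, H4. subst.
    destruct (classic (r = r')) as [<-|Hr].
    + congruence.
    + assert (b = c) by (eapply ls_uniq; eauto). subst c.
      exfalso. apply Hxy. f_equal. f_equal. eapply act_inj; eauto.
Qed.

Definition allbij := forall (p : P) (b : B), ~ I p b ->
        forall lam : L, bij (rho_lam I mul inv act phi b p lam).

Lemma condC_M : allbij -> condC _ _ Minc.
Proof.
  intros Hb [q|[b lam]] [p mu] Hn.
  - simpl in Hn. assert (Hpq : p <> q) by auto.
    destruct hlin as [U _]. destruct (U p q Hpq) as [c [[Hpc Hqc] _]].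
    split.
    + exists (q, act (phi q c) (act (inv (phi p c)) mu)), (inr (c, act (inv (phi p c)) mu)).
      simpl. rewrite act_inv'. auto.
    + intros [m1 n1] y [m2 n2] y' G1 G2 G3 G4 G5 G6. simpl in G1, G4. subst m1 m2.
      destruct y as [r|[c1 k1]], y' as [r'|[c2 k2]]; simpl in *; try (exfalso; congruence).
      destruct G2 as [X1 X2], G3 as [X3 X4], G5 as [X5 X6], G6 as [X7 X8].
      assert (c1 = c2) by (eapply ls_uniq; eauto). subst c2.
      assert (k1 = k2) by (apply (act_inj (phi p c1)); rewrite <- X4, <- X8; auto). subst k2.
      split; congruence.
  - destruct (classic (I p b)) as [Hpb|Hpb].
    + assert (Hmu : mu <> act (phi p b) lam) by (simpl in Hn; tauto).
      assert (Can : forall m y, Minc (inr (b, lam)) m -> Minc y m -> Minc y (p, mu) ->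
                m = (p, act (phi p b) lam) /\ y = inl p).
      { intros [q nu] y G1 G2 G3. simpl in G1. destruct G1 as [Hq ->].
        destruct y as [r|[c k]]; simpl in *.
        - subst. auto.
        - exfalso. destruct G2 as [Hqc E2], G3 as [Hpc E3].
          destruct (classic (q = p)) as [->|Hqp].
          + apply Hmu. congruence.
          + assert (b = c) by (eapply ls_uniq; eauto). subst c.
            apply act_inj in E2. subst. auto. }
      split.
      * exists (p, act (phi p b) lam), (inl p). simpl. auto.
      * intros m y m' y' G1 G2 G3 G4 G5 G6.
        destruct (Can m y) as [-> ->]; auto. destruct (Can m' y') as [-> ->]; auto.
    + split.
      * destruct (Hb p b Hpb lam) as [_ Hs]. destruct (Hs mu) as [[q Hq] Hr].
        destruct (sol_mk b lam p q Hq Hpb) as [A1 [A2 A3]]. rewrite Hr in A3. eauto.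
      * intros m y m' y' G1 G2 G3 G4 G5 G6.
        destruct (sol_char b lam p mu m y Hpb G1 G2 G3) as [q [Hq [-> [-> R1]]]].
        destruct (sol_char b lam p mu m' y' Hpb G4 G5 G6) as [q' [Hq' [-> [-> R2]]]].
        destruct (Hb p b Hpb lam) as [Hi _].
        rewrite <- R2 in R1. apply Hi in R1. injection R1 as ->. auto.
Qed.

Lemma bij_of_C : condC _ _ Minc -> allbij.
Proof.
  intros HC p b Hpb lam. split.
  - intros [q1 H1] [q2 H2] E.
    destruct (sol_mk b lam p q1 H1 Hpb) as [A1 [A2 A3]].
    destruct (sol_mk b lam p q2 H2 Hpb) as [B1 [B2 B3]].
    rewrite <- E in B3.
    assert (Hn : ~ Minc (inr (b, lam)) (p, rho_lam I mul inv act phi b p lam (exist _ q1 H1))).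
    { simpl. tauto. }
    destruct (HC _ _ Hn) as [_ U]. destruct (U _ _ _ _ A1 A2 A3 B1 B2 B3) as [Em _].
    injection Em as Eq _. subst q2. f_equal. apply proof_irrelevance.
  - intros mu.
    assert (Hn : ~ Minc (inr (b, lam)) (p, mu)) by (simpl; tauto).
    destruct (HC _ _ Hn) as [[m [y [G1 [G2 G3]]]] _].
    destruct (sol_char b lam p mu m y Hpb G1 G2 G3) as [q [Hq [_ [_ R]]]]. eauto.
Qed.

Lemma not_on b : exists p, ~ I p b.
Proof.
  destruct hlin as [U [H2 [p0 [b0 Hn]]]].
  destruct (classic (I p0 b)) as [Hp|Hp]; eauto.
  destruct (H2 b0) as [q1 [q2 [Hq [Hq1 Hq2]]]].
  destruct (classic (I q1 b)) as [H1|H1]; eauto.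
  destruct (classic (I q2 b)) as [H3|H3]; eauto.
  exfalso. assert (b = b0) by (eapply ls_uniq; eauto). subst. contradiction.
Qed.

Theorem main :
  (gen_quadrangle Minc <->
     (forall (p : P) (b : B), ~ I p b ->
        forall lam : L, bij (rho_lam I mul inv act phi b p lam)))
  /\
  (gen_quadrangle Minc ->
     ovoid Minc (fun x => exists p : P, x = inl p)
     /\ (forall b : B, equipotent (points_on I b) L)
     /\ steiner_system I
     /\ (finite_type P ->
           finite_type L /\
           exists v k s : nat,
             has_card (fun _ : P => True) v /\ 3 <= v /\
             has_card (fun _ : L => True) k /\ 2 <= k /\
             v - 1 = s * (k - 1) /\
             (forall z : P * L,
                has_card (fun x => Minc x z) (1 + s)) /\
             (forall x : P + (B * L),
                has_card (fun z => Minc x z) (1 + (k - 1))))).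
Proof.
  split.
  { split.
    - intros Hq. apply bij_of_C. apply C_of_gq; auto.
    - intros Hb. apply gq_of; [apply condA_M|apply condB_M|apply condC_M; auto]. }
  intros Hq. assert (Hb : allbij) by (apply bij_of_C, C_of_gq; auto).
  assert (Heq : forall b, equipotent (points_on I b) L).
  { intros b. destruct (not_on b) as [p Hp]. destruct hL as [l0].
    exists (rho_lam I mul inv act phi b p l0). apply Hb; auto. }
  split; [|split; [auto|split]].
  { intros [p mu]. exists (inl p). split; [split; [eauto|reflexivity]|].
    intros x' [[p' ->] H]. simpl in H. subst. auto. }
  { split; auto. intros b b'. destruct (Heq b) as [f Hf], (Heq b') as [f' Hf'].
    destruct (bij_inv _ _ f' Hf') as [g Hg]. exists (fun x => g (f x)). apply bij_comp; auto. }
  intros [v Hv]. destruct hL as [l0].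
  destruct hlin as [LU [L2 [p0 [b0 Hp0b0]]]].
  assert (Hcl : forall b, exists kb, has_card (fun q => I q b) kb /\ has_card (fun _ : L => True) kb).
  { intros b. destruct (has_card_sub _ _ (fun q => I q b) v Hv) as [kb Hkb].
    apply (has_card_ext _ _ (fun q => I q b)) in Hkb; [|tauto].
    exists kb. split; auto. destruct (Heq b) as [f [Fi Fs]].
    apply (has_card_image _ _ _ _ (fun q => match excluded_middle_informative (I q b) with
                                           | left H => f (exist _ q H) | right _ => l0 end) _ Hkb).
    - intros x y Hx Hy. destruct excluded_middle_informative; [|contradiction].
      destruct excluded_middle_informative; [|contradiction].
      intros E. apply Fi in E. injection E. auto.
    - auto.
    - intros z _. destruct (Fs z) as [[q Hq'] Ez]. exists q. split; auto.
      destruct excluded_middle_informative; [|contradiction].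
      rewrite <- Ez. f_equal. f_equal. apply proof_irrelevance. }
  destruct (Hcl b0) as [k [_ HkL]].
  assert (Hk : forall b, has_card (fun q => I q b) k).
  { intros b. destruct (Hcl b) as [kb [H1 H2]].
    rewrite (has_card_uniq _ _ _ _ HkL H2). auto. }
  destruct (L2 b0) as [q1 [q2 [Hq12 [Hq1 Hq2]]]].
  assert (Hk2 : 2 <= k).
  { change 2 with (length [q1; q2]). apply (card_le _ _ _ _ (Hk b0)).
    - constructor; [simpl; intuition|constructor; [simpl; auto|constructor]].
    - simpl. intros x [<-|[<-|[]]]; auto. }
  assert (Hv3 : 3 <= v).
  { change 3 with (length [p0; q1; q2]). apply (card_le _ _ _ _ Hv).
    - assert (p0 <> q1) by (intros ->; contradiction).
      assert (p0 <> q2) by (intros ->; contradiction).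
      constructor; [simpl; intuition|constructor; [simpl; intuition|constructor; [simpl; auto|constructor]]].
    - auto. }
  assert (Hr : forall p, exists lb, NoDup lb /\ (forall b, In b lb <-> I p b) /\
                  v - 1 = length lb * (k - 1)).
  { intros p. pose proof (has_card_remove _ _ _ p Hv Logic.I) as Hvp.
    pose proof Hvp as [lq [Nq [Lq Iq]]].
    set (c := line_through I b0 p).
    set (deqB := fun x y : B => excluded_middle_informative (x = y)).
    exists (nodup deqB (map c lq)).
    assert (Hin : forall b, In b (nodup deqB (map c lq)) <-> I p b).
    { intros b. rewrite nodup_In, in_map_iff. split.
      - intros [q [<- Hq0]]. apply Iq in Hq0 as [_ Hq0]. apply (lt_spec b0 p q). auto.
      - intros Hpb. destruct (L2 b) as [r1 [r2 [Hr12 [Hr1 Hr2]]]].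
        destruct (classic (r1 = p)) as [->|Hr1p].
        + exists r2. split; [apply lt_eq; auto|apply Iq; auto].
        + exists r1. split; [apply lt_eq; auto|apply Iq; auto]. }
    split; [apply NoDup_nodup|split; [auto|]].
    apply (count_fibers _ _ c (k - 1) _ (NoDup_nodup _ _) _ _ Hvp).
    - intros x Hx. apply Hin. apply (lt_spec b0 p x). destruct Hx; auto.
    - intros u Hu. apply Hin in Hu.
      apply (has_card_ext _ (fun x => I x u /\ x <> p)). apply has_card_remove; auto.
      intros x. split.
      + intros [Hxu Hxp]. split; [split; auto|]. apply lt_eq; auto.
      + intros [[_ Hxp] Hc]. split; auto. rewrite <- Hc. apply (lt_spec b0 p x). auto. }
  destruct (Hr p0) as [lb0 [_ [_ Hs]]].
  set (s := length lb0).
  assert (Hrs : forall p, exists lb, NoDup lb /\ (forall b, In b lb <-> I p b) /\ length lb = s).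
  { intros p. destruct (Hr p) as [lb [N1 [N2 N3]]]. exists lb. split; auto. split; auto.
    rewrite Hs in N3. apply Nat.mul_cancel_r in N3; [auto|lia]. }
  split; [exists k; auto|].
  exists v, k, s. split; [auto|split; [auto|split; [auto|split; [auto|split; [auto|split]]]]].
  - intros [p mu]. destruct (Hrs p) as [lb [N1 [N2 N3]]].
    exists (inl p :: map (fun b => inr (b, act (inv (phi p b)) mu)) lb).
    split; [|split].
    + constructor.
      * rewrite in_map_iff. intros [x [E _]]. discriminate.
      * apply NoDup_map_on; auto. intros x y _ _ E. injection E. auto.
    + simpl. rewrite length_map. auto.
    + intros [p'|[b lam]]; simpl; rewrite in_map_iff.
      * split; [intros [E|[x [E _]]]; [injection E; auto|discriminate]|intros ->; auto].
      * split.
        -- intros [E|[x [E Hx]]]; [discriminate|]. injection E as -> <-. split; [apply N2; auto|].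
           rewrite act_inv'. auto.
        -- intros [Hpb ->]. right. exists b. split; [rewrite act_inv; auto|apply N2; auto].
  - intros [p|[b lam]].
    + replace (1 + (k - 1)) with k by lia.
      apply (has_card_image _ _ _ _ (fun mu => (p, mu)) _ HkL).
      * intros x y _ _ E. injection E. auto.
      * reflexivity.
      * intros [p' mu] E. simpl in E. subst. eauto.
    + replace (1 + (k - 1)) with k by lia.
      apply (has_card_image _ _ _ _ (fun q => (q, act (phi q b) lam)) _ (Hk b)).
      * intros x y _ _ E. injection E. auto.
      * intros x Hx. simpl. auto.
      * intros [q nu] [E1 E2]. simpl in *. subst. eauto.
Qed.
End M.

Theorem theorem5
  (P B : Type) (I : P -> B -> Prop)
  (G : Type) (mul : G -> G -> G) (inv : G -> G) (one : G)
  (L : Type) (act : G -> L -> L)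
  (phi : P -> B -> G)
  (hlin : linear_space I)
  (hG : is_group mul inv one)
  (hact : is_left_action mul one act)
  (hL : inhabited L) :

  (gen_quadrangle (M_inc I act phi) <->
     (forall (p : P) (b : B), ~ I p b ->
        forall lam : L, bij (rho_lam I mul inv act phi b p lam)))
  /\
  (gen_quadrangle (M_inc I act phi) ->
     (* (1) X = {x_p} is an ovoid *)
     ovoid (M_inc I act phi) (fun x => exists p : P, x = inl p)
     (* (2) |P_b| = |Lambda| for all b; hence a Steiner system *)
     /\ (forall b : B, equipotent (points_on I b) L)
     /\ steiner_system I
     (* (3) finite case *)
     /\ (finite_type P ->
           finite_type L /\
           exists v k s : nat,
             has_card (fun _ : P => True) v /\ 3 <= v /\
             has_card (fun _ : L => True) k /\ 2 <= k /\
             v - 1 = s * (k - 1) /\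
             (forall z : P * L,
                has_card (fun x => M_inc I act phi x z) (1 + s)) /\
             (forall x : P + (B * L),
                has_card (fun z => M_inc I act phi x z) (1 + (k - 1))))).
Proof. exact (main P B I G mul inv one L act phi hlin hG hact hL). Qed.
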